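(* Let $L\geq 2$ be an integer and $N=L^2$ (so $N\geq 2$), and let $\lambda,\mu\in\mathbb{C}$ be nonzero. For $J\in\mathbb{C}$ consider the polynomial potential $V_J:\mathbb{C}^N\to\mathbb{C}$, $$V_J(q)=\sum_{i\in\Lambda}\Biggl[\frac{\lambda}{4!}q_i^4-\frac{\mu^2}{2}q_i^2+\frac{J}{4}\sum_{j\in\mathcal{N}(i)}(q_i-q_j)^2\Biggr],$$ where $\Lambda$, $\mathcal N(i)$ are as in the context. Let $\mathcal{A}(N,\lambda,\mu^2)$ be the set of pairs $(q,J)\in\mathbb{C}^N\times\mathbb{C}$ such that $\frac{\partial V_J}{\partial q_i}(q)=0$ for all $i=1,\dots,N$ and $\det \mathcal{H}_{V_J}(q)=0$, where $\mathcal{H}_{V_J}(q)=\bigl(\frac{\partial^2 V_J(q)}{\partial q_i\partial q_j}\bigr)_{i,j}$ is the Hessian matrix. Let $$\mathcal{S}(N,\lambda,\mu^2)=\{J\in\mathbb{C}\mid (q,J)\in\mathcal{A}(N,\lambda,\mu^2)\text{ for some } q\in\mathbb{C}^N\}$$ be the set of couplings $J$ for which $V_J$ has at least one singular (degenerate) complex stationary point. Then $\mathcal{S}(N,\lambda,\mu^2)$ is a finite subset of $\mathbb{C}$.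
   Context: $\Lambda$ is the square lattice $\{1,\dots,L\}^2$ (periodic boundary conditions, i.e. the discrete torus $(\mathbb{Z}/L\mathbb{Z})^2$) with its $N=L^2$ sites labelled $1,\dots,N$, and $q=(q_1,\dots,q_N)$ assigns a variable $q_i$ to each site $i$. For $i\in\Lambda$, $\mathcal{N}(i)$ denotes the four nearest-neighbouring sites of $i$ on the periodic square lattice (counted with multiplicity if they coincide). This is the potential energy of the two-dimensional nearest-neighbour $\phi^4$ model with coupling $J$; here $q$ and $J$ are allowed to be complex. *)

(* Defs.v *)
From HB Require Import structures.
From mathcomp Require Import all_boot all_order all_algebra.
From mathcomp Require Import reals.
From mathcomp Require Import complex.
From mathcomp Require Import mpoly.
Set Implicit Arguments. Unset Strict Implicit. Unset Printing Implicit Defensive.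
Import Order.TTheory GRing.Theory Num.Theory.
Local Open Scope ring_scope.

(* Sites of the periodic L x L lattice (discrete torus (Z/LZ)^2). *)
Definition site (L : nat) : finType := ('I_L * 'I_L)%type.

(* Number of sites N = #|site L| (= L^2); sites are labelled by 'I_N
   through enum_rank. *)
Definition nsites (L : nat) : nat := #|{: site L}|.

(* The four nearest neighbours of a site on the periodic square lattice,
   listed with multiplicity. *)
Definition nbrs (L : nat) (s : site L) : seq (site L) :=
  [:: (ordS s.1, s.2); (ord_pred s.1, s.2); (s.1, ordS s.2); (s.1, ord_pred s.2)].

Definition qv (R : realType) (L : nat) (s : site L) : {mpoly R[i][nsites L]} :=
  'X_(enum_rank s).

Definition phi4V (R : realType) (L : nat) (lam mu J : R[i]) : {mpoly R[i][nsites L]} :=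
  \sum_(s : site L)
    ( (lam / 24%:R) *: (qv R s) ^+ 4
    - (mu ^+ 2 / 2%:R) *: (qv R s) ^+ 2
    + (J / 4%:R) *: \sum_(t <- nbrs s) (qv R s - qv R t) ^+ 2 ).

Definition hessV (R : realType) (L : nat) (lam mu J : R[i])
    (q : 'I_(nsites L) -> R[i]) : 'M[R[i]]_(nsites L) :=
  \matrix_(i, j) ((phi4V L lam mu J)^`M(j)^`M(i)).@[q].

Definition inA (R : realType) (L : nat) (lam mu : R[i])
    (q : 'I_(nsites L) -> R[i]) (J : R[i]) : Prop :=
  (forall i : 'I_(nsites L), ((phi4V L lam mu J)^`M(i)).@[q] = 0)
  /\ \det (@hessV R L lam mu J q) = 0.

Definition inS (R : realType) (L : nat) (lam mu J : R[i]) : Prop :=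
  exists q : 'I_(nsites L) -> R[i], @inA R L lam mu q J.

(* Main.v *)
Require Import Defs.
From Stdlib Require Classical_Prop.
From HB Require Import structures.
From mathcomp Require Import all_boot all_order all_algebra all_field.
From mathcomp Require Import all_fingroup ring lra zify.
From mathcomp Require Import reals complex mpoly.
Import Order.TTheory GRing.Theory Num.Theory.
Local Open Scope ring_scope.
Set Implicit Arguments. Unset Strict Implicit. Unset Printing Implicit Defensive.

Section PartA.
Variable F : fieldType.

Lemma roots_finite (p : {poly F}) : p != 0 ->
  exists s : seq F, forall x, root p x -> x \in s.
Proof.
move: {2}(size p) (leqnn (size p)) => k; elim: k p => [|k IH] p hs hp.
  by move: hp; rewrite -size_poly_eq0; move: hs; rewrite leqn0 => ->.
case: (Classical_Prop.classic (exists y, root p y)) => [[y hy]|nor]; last first.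
  by exists [::] => x hx; case: nor; exists x.
have /dvdpP [r hr] : ('X - y%:P) %| p by rewrite dvdp_XsubCl.
have r0 : r != 0 by apply: contraNneq hp => r0; rewrite hr r0 mul0r.
have hsr : (size r <= k)%N.
  move: hs; rewrite hr size_Mmonic ?monicXsubC // size_XsubC addn2 /=.
  by [].
have [s hs'] := IH r hsr r0.
exists (y :: s) => x; rewrite hr rootM root_XsubC in_cons => /orP [/hs' ->|->//].
by rewrite orbT.
Qed.

Definition evconst (P : F -> bool) :=
  exists (E : seq F) (b : bool), forall J, J \notin E -> P J = b.

Lemma evconst_const b : evconst (fun _ => b).
Proof. by exists [::], b. Qed.

Lemma evconst_and P Q : evconst P -> evconst Q -> evconst (fun J => P J && Q J).
Proof.
move=> [E1 [b1 h1]] [E2 [b2 h2]]; exists (E1 ++ E2), (b1 && b2) => J.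
by rewrite mem_cat negb_or => /andP [/h1 -> /h2 ->].
Qed.

Lemma evconst_or P Q : evconst P -> evconst Q -> evconst (fun J => P J || Q J).
Proof.
move=> [E1 [b1 h1]] [E2 [b2 h2]]; exists (E1 ++ E2), (b1 || b2) => J.
by rewrite mem_cat negb_or => /andP [/h1 -> /h2 ->].
Qed.

Lemma evconst_impl P Q : evconst P -> evconst Q -> evconst (fun J => P J ==> Q J).
Proof.
move=> [E1 [b1 h1]] [E2 [b2 h2]]; exists (E1 ++ E2), (b1 ==> b2) => J.
by rewrite mem_cat negb_or => /andP [/h1 -> /h2 ->].
Qed.

Lemma evconst_not P : evconst P -> evconst (fun J => ~~ P J).
Proof. by move=> [E1 [b1 h1]]; exists E1, (~~ b1) => J /h1 ->. Qed.

Lemma evconst_poly (p : {poly F}) : evconst (fun J => p.[J] == 0).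
Proof.
have [->|p0] := eqVneq p 0; first by exists [::], true => J; rewrite horner0 eqxx.
have [s hs] := roots_finite p0; exists s, false => J hJ.
by apply/negbTE; apply: contra hJ => h; apply: hs.
Qed.

Definition ratrep (t : GRing.term F) :=
  exists (p q : {poly F}) (E : seq F), forall J, J \notin E ->
    q.[J] != 0 /\ GRing.eval [:: J] t = p.[J] / q.[J].

Lemma nonroots (q : {poly F}) : q != 0 -> exists E : seq F, forall J, J \notin E -> q.[J] != 0.
Proof.
move=> q0; have [s hs] := roots_finite q0; exists s => J; apply: contra => h.
by apply: hs.
Qed.

Lemma term_ratrep t : ratrep t.
Proof.
elim: t.
- move=> [|i]; first by exists 'X, 1, [::] => J _; rewrite hornerX hornerC oner_eq0 divr1.
  by exists 0, 1, [::] => J _; rewrite hornerC oner_eq0 horner0 mul0r /= nth_nil.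
- by move=> c; exists c%:P, 1, [::] => J _; rewrite !hornerC oner_eq0 divr1.
- by move=> k; exists k%:R%:P, 1, [::] => J _; rewrite !hornerC oner_eq0 divr1.
- move=> t1 [p1 [q1 [E1 h1]]] t2 [p2 [q2 [E2 h2]]].
  exists (p1 * q2 + p2 * q1), (q1 * q2), (E1 ++ E2) => J.
  rewrite mem_cat negb_or => /andP [/h1 [n1 e1] /h2 [n2 e2]].
  rewrite /= e1 e2 !hornerE mulf_neq0 //; split=> //; field.
  by rewrite n1 n2.
- move=> t1 [p1 [q1 [E1 h1]]]; exists (- p1), q1, E1 => J /h1 [n1 e1].
  by rewrite /= e1 hornerN mulNr.
- move=> t1 [p1 [q1 [E1 h1]]] k; exists (p1 *+ k), q1, E1 => J /h1 [n1 e1].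
  by rewrite /= e1 hornerMn mulrnAl.
- move=> t1 [p1 [q1 [E1 h1]]] t2 [p2 [q2 [E2 h2]]].
  exists (p1 * p2), (q1 * q2), (E1 ++ E2) => J.
  rewrite mem_cat negb_or => /andP [/h1 [n1 e1] /h2 [n2 e2]].
  rewrite /= e1 e2 !hornerE mulf_neq0 //; split=> //; idtac.
  rewrite invfM; set a := p1.[J]; set b := p2.[J]; set c := q1.[J]^-1; set d := q2.[J]^-1.
  change (a * c * b * d = a * b * (c * d)); ring.
- move=> t1 [p1 [q1 [E1 h1]]].
  have [p10|p1n0] := eqVneq p1 0.
    exists 0, 1, E1 => J /h1 [n1 e1]; rewrite /= e1 p10 horner0 mul0r invr0.
    by split; rewrite hornerC ?oner_eq0 ?mul0r.
  have [E2 h2] := nonroots p1n0.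
  exists q1, p1, (E1 ++ E2) => J.
  rewrite mem_cat negb_or => /andP [/h1 [n1 e1] /h2 n2].
  by split=> //; rewrite /= e1 invf_div.
- move=> t1 [p1 [q1 [E1 h1]]] k; exists (p1 ^+ k), (q1 ^+ k), E1 => J /h1 [n1 e1].
  by rewrite /= e1 !horner_exp expf_neq0 // expr_div_n.
Qed.

Lemma qf_evconst (f : GRing.formula F) : evconst (fun J => GRing.qf_eval [:: J] f).
Proof.
elim: f => /=.
- by move=> b; apply: evconst_const.
- move=> t1 t2; have [p1 [q1 [E1 h1]]] := term_ratrep t1.
  have [p2 [q2 [E2 h2]]] := term_ratrep t2.
  have [E3 [b h3]] := evconst_poly (p1 * q2 - p2 * q1).
  exists (E1 ++ E2 ++ E3), b => J; rewrite !mem_cat !negb_or => /andP [/h1 [n1 e1] /andP [/h2 [n2 e2] /h3 e3]].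
  rewrite -e3 e1 e2 !hornerE -subr_eq0.
  have -> : p1.[J] / q1.[J] - p2.[J] / q2.[J] = (p1.[J] * q2.[J] - p2.[J] * q1.[J]) / (q1.[J] * q2.[J]).
    by field; rewrite n1 n2.
  by rewrite mulf_eq0 invr_eq0 mulf_eq0 (negbTE n1) (negbTE n2) /= orbF.
- move=> t1; have [p1 [q1 [E1 h1]]] := term_ratrep t1.
  have [E3 [b h3]] := evconst_poly p1.
  exists (E1 ++ E3), (~~ b) => J; rewrite !mem_cat !negb_or => /andP [/h1 [n1 e1] /h3 e3].
  by rewrite unitfE e1 -e3 mulf_eq0 invr_eq0 (negbTE n1) orbF.
- by move=> f1 h1 f2 h2; apply: evconst_and.
- by move=> f1 h1 f2 h2; apply: evconst_or.
- by move=> f1 h1 f2 h2; apply: evconst_impl.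
- by move=> f1 h1; apply: evconst_not.
- by move=> *; apply: evconst_const.
- by move=> *; apply: evconst_const.
Qed.

End PartA.

Section Terms.
Variable F : fieldType.
Implicit Types (e : seq F).

Definition tsum T (s : seq T) (f : T -> GRing.term F) :=
  foldr (fun x t => GRing.Add (f x) t) (@GRing.Const F 0) s.
Definition tprod T (s : seq T) (f : T -> GRing.term F) :=
  foldr (fun x t => GRing.Mul (f x) t) (@GRing.Const F 1) s.
Definition tand T (s : seq T) (f : T -> GRing.formula F) :=
  foldr (fun x g => GRing.And (f x) g) (@GRing.Bool F true) s.

Lemma eval_tsum e T (s : seq T) f : GRing.eval e (tsum s f) = \sum_(x <- s) GRing.eval e (f x).
Proof. by elim: s => [|x s IH]; rewrite ?big_nil ?big_cons //= IH. Qed.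
Lemma eval_tprod e T (s : seq T) f : GRing.eval e (tprod s f) = \prod_(x <- s) GRing.eval e (f x).
Proof. by elim: s => [|x s IH]; rewrite ?big_nil ?big_cons //= IH. Qed.
Lemma holds_tand e T (s : seq T) f : GRing.holds e (tand s f) <-> (forall x, List.In x s -> GRing.holds e (f x)).
Proof.
elim: s => [|x s IH] /=; first by split.
split; first by move=> [h1 /IH h2] y [<-|/h2].
by move=> h; split; [apply: h; left | apply/IH => y hy; apply: h; right].
Qed.

Variable n : nat.

Definition tmpoly (p : {mpoly F[n]}) : GRing.term F :=
  tsum (msupp p) (fun m => GRing.Mul (@GRing.Const F p@_m)
     (tprod (index_enum 'I_n) (fun i => GRing.Exp (@GRing.Var F i.+1) (m i)))).

Lemma eval_tmpoly e p : GRing.eval e (tmpoly p) = p.@[fun i : 'I_n => e`_i.+1].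
Proof.
rewrite mevalE /tmpoly eval_tsum; apply: eq_bigr => m _ /=.
by rewrite eval_tprod.
Qed.

Fixpoint upd e k (xs : seq F) := if xs is x :: xs' then upd (set_nth 0 e k x) k.+1 xs' else e.

Lemma nth_upd xs : forall e k j, (upd e k xs)`_j =
  if (k <= j < k + size xs)%N then xs`_(j - k) else e`_j.
Proof.
elim: xs => [|x xs IH] e k j /=; first by rewrite addn0; case: ltnP => // h1; rewrite ltnNge h1 andbF.
rewrite IH nth_set_nth /=.
have [hkj|hkj] := ltnP k j.
  rewrite (ltnW hkj) /= addnS addSn (gtn_eqF hkj) -(subnSK hkj) /=.
  by case: ifP.
rewrite /=; case: (eqVneq j k) => [->|hjk]; first by rewrite leqnn addnS ltnS leq_addr subnn.
by have -> : (k <= j)%N = false by apply/negbTE; rewrite -ltnNge ltn_neqAle hjk.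
Qed.

Lemma holds_exists e body : forall m k, GRing.holds e (foldr (fun i f => GRing.Exists i f) body (iota k m)) <->
  exists xs, size xs = m /\ GRing.holds (upd e k xs) body.
Proof.
move=> m; elim: m e => [|m IH] e k /=.
  by split; [move=> h; exists [::] | move=> [[|x xs] [//= _ h]]].
split.
  by move=> [x /IH [xs [hs h]]]; exists (x :: xs); split; rewrite //= hs.
move=> [[|x xs] [//= [hs] h]]; exists x; apply/IH; by exists xs.
Qed.

End Terms.

Lemma mem_In (T : eqType) (x : T) s : x \in s -> List.In x s.
Proof. by elim: s => [|y s IH] //=; rewrite in_cons => /orP [/eqP ->|/IH]; [left|right]. Qed.

Section Encode.
Variables (R : realType) (L : nat) (lam mu : R[i]).
Local Notation n := (nsites L).
Local Notation F := (R[i]).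

Definition Apart : {mpoly R[i][n]} :=
  \sum_(s : site L) ((lam / 24%:R) *: (qv R s) ^+ 4 - (mu ^+ 2 / 2%:R) *: (qv R s) ^+ 2).
Definition Bpart : {mpoly R[i][n]} :=
  \sum_(s : site L) ((1 / 4%:R) *: \sum_(t <- nbrs s) (qv R s - qv R t) ^+ 2).

Lemma phi4V_AB J : phi4V L lam mu J = Apart + J *: Bpart.
Proof.
rewrite /phi4V /Apart /Bpart scaler_sumr -big_split; apply: eq_bigr => s _.
by rewrite scalerA mulrA mulr1.
Qed.

Definition statT (i : 'I_n) : GRing.term F :=
  GRing.Add (tmpoly (Apart^`M(i))) (GRing.Mul (@GRing.Var F 0) (tmpoly (Bpart^`M(i)))).
Definition hessT (i j : 'I_n) : GRing.term F :=
  GRing.Add (tmpoly (Apart^`M(j)^`M(i))) (GRing.Mul (@GRing.Var F 0) (tmpoly (Bpart^`M(j)^`M(i)))).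
Definition detT : GRing.term F :=
  tsum (index_enum {perm 'I_n}) (fun s : {perm 'I_n} => GRing.Mul (@GRing.Const F ((-1) ^+ s))
     (tprod (index_enum 'I_n) (fun i => hessT i (s i)))).
Definition bodyF : GRing.formula F :=
  GRing.And (tand (index_enum 'I_n) (fun i => GRing.Equal (statT i) (@GRing.Const F 0)))
            (GRing.Equal detT (@GRing.Const F 0)).
Definition PhiF : GRing.formula F :=
  foldr (fun i f => GRing.Exists i f) bodyF (iota 1 n).

Lemma body_inA e J (q : 'I_n -> F) : e`_0 = J -> (forall i : 'I_n, e`_i.+1 = q i) ->
  GRing.holds e bodyF <-> inA lam mu q J.
Proof.
move=> e0 eq.
have hv p : p.@[fun i : 'I_n => e`_i.+1] = p.@[q] by apply: meval_eq.
have hs i : GRing.eval e (statT i) = ((phi4V L lam mu J)^`M(i)).@[q].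
  by rewrite /= !eval_tmpoly !hv phi4V_AB mderivD mderivZ mevalD mevalZ e0.
have hh i j : GRing.eval e (hessT i j) = hessV lam mu J q i j.
  rewrite /= !eval_tmpoly !hv /hessV mxE phi4V_AB !(mderivD, mderivZ) mevalD mevalZ e0 //.
have hd : GRing.eval e detT = \det (hessV lam mu J q).
  rewrite /detT eval_tsum /determinant; apply: eq_bigr => s _ /=.
  by rewrite eval_tprod; congr (_ * _); apply: eq_bigr => i _; rewrite hh.
rewrite /bodyF /= holds_tand hd /inA; split.
  move=> [h1 h2]; split=> // i; rewrite -hs; apply: (h1 i).
  by apply: mem_In; rewrite mem_index_enum.
move=> [h1 h2]; split=> // i _; exact: (etrans (hs i) (h1 i)).
Qed.

Lemma inS_PhiF J : inS L lam mu J <-> GRing.holds [:: J] PhiF.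
Proof.
rewrite /PhiF holds_exists; split.
  move=> [q hq]; exists [seq q i | i <- enum 'I_n]; split; first by rewrite size_map size_enum_ord.
  apply/(body_inA (q := q) (J := J)) => //.
    by rewrite nth_upd.
  move=> i; rewrite nth_upd size_map size_enum_ord.
  have -> : (0 < i.+1 < 1 + n)%N by have := ltn_ord i; lia.
  rewrite subn1 /=.
  by rewrite (nth_map i) ?size_enum_ord // nth_ord_enum.
move=> [xs [hs hb]]; exists (fun i : 'I_n => xs`_i).
have h1 : (upd [:: J] 1 xs)`_0 = J by rewrite nth_upd.
have h2 : forall i : 'I_n, (upd [:: J] 1 xs)`_i.+1 = xs`_i.
  move=> i; rewrite nth_upd hs; have -> : (0 < i.+1 < 1 + n)%N by have := ltn_ord i; lia.
  by rewrite subn1.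
by apply/(body_inA h1 h2).
Qed.

End Encode.

Section Real.
Variable R : realFieldType.

Lemma keyM (a w M : R) : 0 < a -> 0 <= M -> 0 <= w -> a * M ^+ 3 <= a * w * M -> M <= 1 + w.
Proof.
move=> a0 M0 w0 h.
have h1 : M ^+ 3 <= w * M.
  by rewrite -(ler_pM2l a0); move: h; rewrite -mulrA.
case: (lerP M 1) => hM; first lra.
have h2 : M * M <= w.
  have Mp : 0 < M by lra.
  rewrite -(ler_pM2r Mp); move: h1; by rewrite !exprS expr0 mulr1 mulrA.
nra.
Qed.

Lemma key3 (u b K th eta y nh nf : R) : 0 < u -> 0 < b -> 0 <= K -> 0 <= y -> y <= K ->
  0 <= nh -> th <= u / 2 -> th <= 1 -> 0 <= th -> 4 * b * K ^+ 2 * th <= u ^+ 3 ->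
  3 * eta <= K * th -> nf <= eta -> 2 * u * y <= y * nh + 3 * nf -> u <= b * y ^+ 2 + nh ->
  th <= nh.
Proof.
move=> u0 b0 K0 y0 yK nh0 thu th1 th0 hth heta hnf h1 h2.
case: (lerP th nh) => // hlt; exfalso.
have e1 : u / 2 < b * y ^+ 2 by lra.
have e2 : u * y <= K * th.
  have : y * nh <= K * th by nra.
  lra.
have e3 : (u * y) ^+ 2 <= (K * th) ^+ 2.
  have : 0 <= u * y by nra. nra.
have e4 : (K * th) ^+ 2 <= K ^+ 2 * th.
  have : th ^+ 2 <= th by nra.
  rewrite exprMn; have : 0 <= K ^+ 2 by nra.
  nra.
have e5 : b * (u * y) ^+ 2 <= b * (K ^+ 2 * th).
  by apply: ler_wpM2l; [lra | exact: le_trans e3 e4].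
have e6 : u ^+ 2 * (u / 2) < u ^+ 2 * (b * y ^+ 2).
  by rewrite ltr_pM2l //; nra.
have e7 : b * (u * y) ^+ 2 = u ^+ 2 * (b * y ^+ 2) by ring.
have e8 : u ^+ 2 * (u / 2) = u ^+ 3 / 2 by ring.
have e9 : b * (K ^+ 2 * th) = (4 * b * K ^+ 2 * th) / 4 by field.
have : 0 < u ^+ 3 by rewrite exprn_gt0.
lra.
Qed.
End Real.

Section Norms.
Variable R : realType.
Definition nn (x : R[i]) : R := complex.Re `|x|.

Lemma nnE x : `|x| = (nn x)%:C%C.
Proof. by rewrite /nn RRe_real // normr_real. Qed.

Lemma nn_le x y : (`|x| <= `|y|) = (nn x <= nn y).
Proof. by rewrite !nnE lecR. Qed.

Lemma nn_ge0 x : 0 <= nn x.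
Proof. by have := normr_ge0 x; rewrite nnE -[0 : R[i]]/((0 : R)%:C%C) lecR. Qed.

Lemma nnM x y : nn (x * y) = nn x * nn y.
Proof. by apply: complexI; rewrite rmorphM /= -!nnE normrM. Qed.

Lemma nnD x y : nn (x + y) <= nn x + nn y.
Proof. by rewrite -lecR rmorphD /= -!nnE ler_normD. Qed.

Lemma nnN x : nn (- x) = nn x.
Proof. by rewrite /nn normrN. Qed.

Lemma nnB x y : nn (x - y) <= nn x + nn y.
Proof. by rewrite -(nnN y) nnD. Qed.

Lemma nnX x k : nn (x ^+ k) = nn x ^+ k.
Proof. by apply: complexI; rewrite rmorphXn /= -!nnE normrX. Qed.

Lemma nn_eq0 x : (nn x == 0) = (x == 0).
Proof. by rewrite -[x == 0]normr_eq0 nnE -[0 : R[i]]/((0 : R)%:C%C) (inj_eq (@complexI R)). Qed.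

Lemma nn_nat k : nn k%:R = k%:R.
Proof. by apply: complexI; rewrite -nnE normr_nat rmorph_nat. Qed.

Lemma nnV x : nn (x^-1) = (nn x)^-1.
Proof. by apply: complexI; rewrite fmorphV /= -!nnE normfV. Qed.

Lemma nn_sum I (r : seq I) (G : I -> R[i]) :
  nn (\sum_(j <- r) G j) <= \sum_(j <- r) nn (G j).
Proof.
elim: r => [|x r IH]; first by rewrite !big_nil /nn normr0.
rewrite !big_cons; apply: le_trans (nnD _ _) _; exact: lerD.
Qed.

Lemma nn_lt x (d : R[i]) : 0 < d -> `|x| < d -> nn x < complex.Re d.
Proof.
move=> d0; rewrite nnE -{1}(RRe_real (gtr0_real d0)) ltcR //.
Qed.

End Norms.

Section Deriv.
Variables (R : realType) (L : nat) (lam mu : R[i]).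
Local Notation n := (nsites L).
Local Notation MP := ({mpoly R[i][n]}).

Lemma dXk (k i : 'I_n) : ('X_k : MP)^`M(i) = ((k == i)%:R : R[i]) *: 1.
Proof.
rewrite mderivX mnm1E; case: eqVneq => [->|h]; last by rewrite !scale0r.
have -> : (U_(i) - U_(i))%MM = 0%MM by apply/mnmP => j; rewrite mnmBE subnn mnm0E.
by rewrite mpolyX0.
Qed.

Lemma d1 (i : 'I_n) : (1 : MP)^`M(i) = 0.
Proof. by rewrite -mpolyC1 mderivC. Qed.

Lemma dpow (p : MP) k i : (p ^+ k.+1)^`M(i) = (p ^+ k * p^`M(i)) *+ k.+1.
Proof.
elim: k => [|k IH]; first by rewrite expr0 expr1 mul1r.
rewrite exprS mderivM IH.
by rewrite mulrnAr mulrA -exprS [p^`M(i) * _]mulrC [RHS]mulrS.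
Qed.

Lemma Apart_re : Apart L lam mu =
  \sum_(k : 'I_n) ((lam / 24%:R) *: ('X_k : MP) ^+ 4 - (mu ^+ 2 / 2%:R) *: 'X_k ^+ 2).
Proof.
rewrite /Apart (reindex (@enum_val (site L) (site L))) /=; last first.
  by apply: onW_bij; apply: enum_val_bij.
by apply: eq_bigr => k _; rewrite /qv enum_valK.
Qed.

Lemma dsum I (r : seq I) (G : I -> MP) i : (\sum_(x <- r) G x)^`M(i) = \sum_(x <- r) (G x)^`M(i).
Proof. by elim: r => [|x r IH]; rewrite ?big_nil ?mderiv0 // !big_cons mderivD IH. Qed.

Lemma evsum I (r : seq I) (G : I -> MP) q : (\sum_(x <- r) G x).@[q] = \sum_(x <- r) (G x).@[q].
Proof. by elim: r => [|x r IH]; rewrite ?big_nil ?meval0 // !big_cons mevalD IH. Qed.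

Lemma collapse (G : 'I_n -> R[i]) i : \sum_(k : 'I_n) ((k == i)%:R : R[i]) * G k = G i.
Proof.
rewrite (bigD1 i) //= eqxx mul1r big1 ?addr0 // => k /negbTE ->; by rewrite mul0r.
Qed.

Lemma n24 : (24%:R : R[i]) != 0. Proof. by rewrite pnatr_eq0. Qed.
Lemma n2 : (2%:R : R[i]) != 0. Proof. by rewrite pnatr_eq0. Qed.
Lemma n6 : (6%:R : R[i]) != 0. Proof. by rewrite pnatr_eq0. Qed.
Lemma n4 : (4%:R : R[i]) != 0. Proof. by rewrite pnatr_eq0. Qed.

Lemma evA1 (q : 'I_n -> R[i]) i :
  ((Apart L lam mu)^`M(i)).@[q] = lam / 6%:R * q i ^+ 3 - mu ^+ 2 * q i.
Proof.
rewrite Apart_re dsum evsum -(collapse (fun k => lam / 6%:R * q k ^+ 3 - mu ^+ 2 * q k) i).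
apply: eq_bigr => k _.
rewrite mderivB !mderivZ !dpow !dXk mevalB !mevalZ !mevalMn !mevalM !mevalZ !meval1 !rmorphXn /= !mevalXU.
by field; rewrite ?n24 ?n2 ?n6.
Qed.

Lemma dA1 (k j : 'I_n) :
  ((lam / 24%:R) *: ('X_k : MP) ^+ 4 - (mu ^+ 2 / 2%:R) *: 'X_k ^+ 2)^`M(j) =
  ((k == j)%:R : R[i])%:MP * ((lam / 6%:R)%:MP * 'X_k ^+ 3 - (mu ^+ 2)%:MP * 'X_k).
Proof.
have h6 : (lam / 6%:R)%:MP = (lam / 24%:R)%:MP * 4%:R :> MP.
  by rewrite -mpolyC_nat -mpolyCM; congr (_%:MP); field; rewrite ?n24 ?n6.
have h2 : (mu ^+ 2)%:MP = (mu ^+ 2 / 2%:R)%:MP * 2%:R :> MP.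
  by rewrite -mpolyC_nat -mpolyCM; congr (_%:MP); field; rewrite ?n2.
rewrite mderivB !mderivZ !dpow !dXk -!mul_mpolyC h6 h2.
ring.
Qed.

Lemma evA2 (q : 'I_n -> R[i]) i j :
  ((Apart L lam mu)^`M(j)^`M(i)).@[q] = (i == j)%:R * (lam / 2%:R * q i ^+ 2 - mu ^+ 2).
Proof.
have -> : (Apart L lam mu)^`M(j) = \sum_(k : 'I_n) ((lam / 24%:R) *: ('X_k : MP) ^+ 4 - (mu ^+ 2 / 2%:R) *: 'X_k ^+ 2)^`M(j).
  by rewrite Apart_re dsum.
rewrite dsum evsum -(collapse (fun k => (k == j)%:R * (lam / 2%:R * q k ^+ 2 - mu ^+ 2)) i).
apply: eq_bigr => k _.
rewrite dA1 mderiv_mulC mderivB !mderiv_mulC dpow !dXk.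
rewrite !(mevalM, mevalC, mevalB, mevalMn, mevalZ, meval1, mevalXU).
by field; rewrite ?n2 ?n6.
Qed.

Definition Cst : R := \sum_(s : site L) \sum_(t <- nbrs s) (2 : R).

Lemma Cst_ge0 : 0 <= Cst.
Proof. by apply: sumr_ge0 => s _; apply: sumr_ge0 => t _. Qed.

Lemma nn_delta (b : bool) : nn (b%:R : R[i]) <= 1.
Proof. by case: b; rewrite nn_nat. Qed.

Lemma evB1 (q : 'I_n -> R[i]) i :
  ((Bpart R L)^`M(i)).@[q] = \sum_(s : site L) (1 / 4%:R) * \sum_(t <- nbrs s)
     ((q (enum_rank s) - q (enum_rank t)) * ((enum_rank s == i)%:R - (enum_rank t == i)%:R)) *+ 2.
Proof.
rewrite /Bpart dsum evsum; apply: eq_bigr => s _.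
rewrite mderivZ mevalZ dsum evsum; congr (_ * _); apply: eq_bigr => t _.
rewrite dpow expr1 /qv mderivB !dXk.
rewrite !(mevalM, mevalC, mevalB, mevalMn, mevalZ, meval1, mevalXU).
by rewrite !mulr1.
Qed.

Lemma dB1 j : (Bpart R L)^`M(j) = \sum_(s : site L) (1 / 4%:R) *: \sum_(t <- nbrs s)
   ((qv R s - qv R t) * (((enum_rank s == j)%:R : R[i]) *: 1 - ((enum_rank t == j)%:R : R[i]) *: 1)) *+ 2.
Proof.
rewrite /Bpart dsum; apply: eq_bigr => s _.
rewrite mderivZ dsum; congr (_ *: _); apply: eq_bigr => t _.
by rewrite dpow expr1 /qv mderivB !dXk.
Qed.

Lemma evB2 (q : 'I_n -> R[i]) i j :
  ((Bpart R L)^`M(j)^`M(i)).@[q] = \sum_(s : site L) (1 / 4%:R) * \sum_(t <- nbrs s)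
     (((enum_rank s == i)%:R - (enum_rank t == i)%:R) * ((enum_rank s == j)%:R - (enum_rank t == j)%:R)) *+ 2.
Proof.
rewrite dB1 dsum evsum; apply: eq_bigr => s _.
rewrite mderivZ mevalZ dsum evsum; congr (_ * _); apply: eq_bigr => t _.
rewrite mderivMn mderivM /qv !mderivB !mderivZ !dXk !d1 !scaler0 subr0 mulr0 addr0.
rewrite !(mevalM, mevalC, mevalB, mevalMn, mevalZ, meval1, mevalXU).
by rewrite !mulr1.
Qed.

Lemma nn1 : nn (1 : R[i]) = 1.
Proof. by rewrite /nn normr1. Qed.

Lemma nn_quarter : nn (1 / 4%:R : R[i]) = 1 / 4.
Proof. by rewrite nnM nnV nn_nat nn1. Qed.

Lemma nn_mul2 (x : R[i]) : nn (x *+ 2) <= 2 * nn x.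
Proof. by rewrite mulr2n; apply: le_trans (nnD _ _) _; rewrite mulr2n mulrDl mul1r. Qed.

Lemma nn_dd (a b : bool) : nn ((a%:R : R[i]) - b%:R) <= 2.
Proof.
apply: le_trans (nnB _ _) _; have := nn_delta a; have := nn_delta b; lra.
Qed.

Lemma Cst_sum (c : R) : \sum_(s : site L) \sum_(t <- nbrs s) (2 * c) = Cst * c.
Proof. by rewrite /Cst mulr_suml; apply: eq_bigr => s _; rewrite mulr_suml. Qed.

Lemma sum_bound (T : Type) (r : seq T) (G : T -> R[i]) (c : R) :
  (forall t, nn (G t) <= 8 * c) -> nn ((1 / 4%:R) * \sum_(t <- r) G t) <= \sum_(t <- r) (2 * c).
Proof.
move=> hG; rewrite nnM nn_quarter.
have : nn (\sum_(t <- r) G t) <= \sum_(t <- r) (8 * c).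
  by apply: le_trans (nn_sum _ _) _; apply: ler_sum => t _; apply: hG.
have -> : \sum_(t <- r) (8 * c) = 4 * \sum_(t <- r) (2 * c).
  by rewrite mulr_sumr; apply: eq_bigr => t _; ring.
move=> h; have h0 : 0 <= 1 / 4 :> R by lra.
apply: le_trans (ler_wpM2l h0 h) _; lra.
Qed.

Lemma bndB1 (q : 'I_n -> R[i]) i M : (forall k, nn (q k) <= M) ->
  nn (((Bpart R L)^`M(i)).@[q]) <= Cst * M.
Proof.
move=> hM; rewrite evB1 -Cst_sum; apply: le_trans (nn_sum _ _) _; apply: ler_sum => s _.
apply: sum_bound => t; apply: le_trans (nn_mul2 _) _; rewrite nnM.
have h1 : nn (q (enum_rank s) - q (enum_rank t)) <= 2 * M.
  by apply: le_trans (nnB _ _) _; have := hM (enum_rank s); have := hM (enum_rank t); lra.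
have h2 := nn_dd (enum_rank s == i) (enum_rank t == i).
have := nn_ge0 (q (enum_rank s) - q (enum_rank t)).
have := nn_ge0 (((enum_rank s == i)%:R : R[i]) - (enum_rank t == i)%:R).
nra.
Qed.

Lemma bndB2 (q : 'I_n -> R[i]) i j :
  nn (((Bpart R L)^`M(j)^`M(i)).@[q]) <= Cst.
Proof.
rewrite evB2 -[Cst]mulr1 -Cst_sum; apply: le_trans (nn_sum _ _) _; apply: ler_sum => s _.
apply: sum_bound => t; apply: le_trans (nn_mul2 _) _; rewrite nnM.
have h1 := nn_dd (enum_rank s == i) (enum_rank t == i).
have h2 := nn_dd (enum_rank s == j) (enum_rank t == j).
have := nn_ge0 (((enum_rank s == i)%:R : R[i]) - (enum_rank t == i)%:R).
have := nn_ge0 (((enum_rank s == j)%:R : R[i]) - (enum_rank t == j)%:R).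
nra.
Qed.

End Deriv.

Section Small.
Variables (R : realType) (L : nat) (lam mu : R[i]).
Hypotheses (hlam : lam != 0) (hmu : mu != 0).
Local Notation n := (nsites L).

Lemma nnpos (x : R[i]) : x != 0 -> 0 < nn x.
Proof. by move=> hx; rewrite lt_def nn_ge0 nn_eq0 hx. Qed.

Lemma stat_eq (q : 'I_n -> R[i]) J i :
  ((phi4V L lam mu J)^`M(i)).@[q] = lam / 6%:R * q i ^+ 3 - mu ^+ 2 * q i + J * ((Bpart R L)^`M(i)).@[q].
Proof. by rewrite phi4V_AB mderivD mderivZ mevalD mevalZ evA1. Qed.

Lemma hess_eq (q : 'I_n -> R[i]) J i j :
  hessV lam mu J q i j = (i == j)%:R * (lam / 2%:R * q i ^+ 2 - mu ^+ 2) + J * ((Bpart R L)^`M(j)^`M(i)).@[q].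
Proof. by rewrite /hessV mxE phi4V_AB !mderivD !mderivZ mevalD mevalZ evA2. Qed.

Lemma smallJ : exists d : R[i], 0 < d /\ forall J, `|J| < d -> ~ inS L lam mu J.
Proof.
pose a := nn (lam / 6%:R); pose b := nn (lam / 2%:R); pose u := nn (mu ^+ 2).
pose C := Cst R L; pose m : R := n%:R.
have a0 : 0 < a by apply: nnpos; rewrite mulf_neq0 // invr_neq0 // n6.
have b0 : 0 < b by apply: nnpos; rewrite mulf_neq0 // invr_neq0 // n2.
have u0 : 0 < u by apply: nnpos; rewrite expf_neq0.
have C0 : 0 <= C := Cst_ge0 R L.
have m0 : 0 <= m by rewrite /m ler0n.
pose K := 1 + (u + C) / a.
have K1 : 1 <= K by rewrite /K lerDl divr_ge0 // ?ltW //; lra.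
pose th := Num.min 1 (Num.min (u / 2) (u ^+ 3 / (4 * b * K ^+ 2))).
have hq0 : 0 < 4 * b * K ^+ 2 by apply: mulr_gt0; [apply: mulr_gt0; lra | apply: exprn_gt0; lra].
have th0 : 0 < th.
  rewrite /th !lt_min ltr01 /=; apply/andP; split; first lra.
  by apply: divr_gt0 => //; apply: exprn_gt0.
have th1 : th <= 1 by rewrite /th ge_min lexx.
have th2 : th <= u / 2 by rewrite /th ge_min ge_min lexx orbT.
have th3 : 4 * b * K ^+ 2 * th <= u ^+ 3.
  have : th <= u ^+ 3 / (4 * b * K ^+ 2) by rewrite /th ge_min ge_min lexx !orbT.
  by rewrite ler_pdivlMr // mulrC.
pose den := 3 * C + m * C + 1.
have den1 : 1 <= den by rewrite /den; nra.
pose de := th / den.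
have de0 : 0 < de by rewrite /de divr_gt0 //; lra.
have de_th : de * den = th by rewrite /de mulfVK // gt_eqF //; lra.
have e : th = 3 * de * C + (de * (m * C) + de) by rewrite -de_th /den; ring.
have e1 : 0 <= de * (m * C) by apply: mulr_ge0; [lra | apply: mulr_ge0].
have e2 : 0 <= 3 * de * C by apply: mulr_ge0; [lra | done].
have de1 : de <= 1 by lra.
have de2 : 3 * de * C <= th by lra.
have de3 : m * de * C < th.
  have -> : m * de * C = de * (m * C) by ring.
  lra.
exists (de%:C)%C; split; first by rewrite -[0 : R[i]]/((0 : R)%:C%C) ltcR.
move=> J hJ [q [hst hdet]].
have nJ : nn J < de.
  have dC : 0 < (de%:C)%C :> R[i] by rewrite -[0 : R[i]]/((0 : R)%:C%C) ltcR.
  exact: (nn_lt dC hJ).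
have hs i : lam / 6%:R * q i ^+ 3 - mu ^+ 2 * q i = - (J * ((Bpart R L)^`M(i)).@[q]).
  by apply/eqP; rewrite -subr_eq0 opprK -stat_eq hst.
have hK k : nn (q k) <= K.
  have [j _ hj] := @arg_maxP _ _ _ k xpredT (fun k => nn (q k)) isT.
  pose M := nn (q j).
  have hM k' : nn (q k') <= M by apply: (hj k').
  have M0 : 0 <= M := nn_ge0 _.
  have hB := bndB1 j hM.
  have ej : lam / 6%:R * q j ^+ 3 = mu ^+ 2 * q j - J * ((Bpart R L)^`M(j)).@[q].
    by rewrite -[LHS](subrK (mu ^+ 2 * q j)) hs addrC.
  have h1 : a * M ^+ 3 <= u * M + nn J * nn (((Bpart R L)^`M(j)).@[q]).
    rewrite /a /M -nnX -nnM ej -nnM -(nnM (mu ^+ 2)); exact: nnB.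
  have h2 : nn J * nn (((Bpart R L)^`M(j)).@[q]) <= C * M.
    apply: (@le_trans _ _ (1 * nn (((Bpart R L)^`M(j)).@[q]))); last by rewrite mul1r.
    apply: ler_wpM2r; [exact: nn_ge0 | lra].
  have h3 : M <= K.
    apply: (@keyM _ a) => //; first by apply: divr_ge0; [lra | apply: ltW].
    have ew : a * ((u + C) / a) = u + C by rewrite mulrC divfK // gt_eqF.
    rewrite ew; have : 0 <= C * M by apply: mulr_ge0.
    nra.
  exact: le_trans (hM k) h3.
have hnh i : th <= nn (lam / 2%:R * q i ^+ 2 - mu ^+ 2).
  pose x := q i; pose h := lam / 2%:R * x ^+ 2 - mu ^+ 2.
  pose f := lam / 6%:R * x ^+ 3 - mu ^+ 2 * x.
  have hB := bndB1 i hK.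
  have hf : nn f <= de * (C * K).
    rewrite /f /x hs nnN nnM.
    apply: (@le_trans _ _ (de * nn (((Bpart R L)^`M(i)).@[q]))).
      by apply: ler_wpM2r; [exact: nn_ge0 | lra].
    by apply: ler_wpM2l => //; lra.
  have id1 : 2%:R * mu ^+ 2 * x = x * h - 3%:R * f.
    by rewrite /h /f; field; rewrite ?n2 ?n6.
  have id2 : mu ^+ 2 = lam / 2%:R * x ^+ 2 - h by rewrite /h; ring.
  have i1 : 2 * u * nn x <= nn x * nn h + 3 * nn f.
    have := nnB (x * h) (3%:R * f); rewrite -id1 !nnM !nn_nat.
    by rewrite /u nnX expr2.
  have i2 : u <= b * nn x ^+ 2 + nn h.
    by rewrite /u id2 /b -nnX -nnM; exact: nnB.
  apply: (@key3 _ u b K th (de * (C * K)) (nn x) (nn h) (nn f)) => //; try lra.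
  - exact: nn_ge0.
  - exact: hK.
  - exact: nn_ge0.
  - have : 0 <= K by lra.
    nra.
move/eqP: hdet => /det0P [v v0 hv].
have /existsP [k0 hk0] : [exists k, v 0 k != 0].
  apply: contraR v0 => /existsPn h; apply/eqP/matrixP => i k.
  by rewrite ord1 mxE; have := h k; rewrite negbK => /eqP.
have [j _ hj] := @arg_maxP _ _ _ k0 xpredT (fun k => nn (v 0 k)) isT.
pose V := nn (v 0 j).
have hV k : nn (v 0 k) <= V by apply: (hj k).
have V0 : 0 < V by apply: (lt_le_trans (nnpos hk0) (hV k0)).
have hcol : \sum_(k < n) v 0 k * hessV lam mu J q k j = 0.
  by move/matrixP: hv => /(_ 0 j); rewrite !mxE.
have hsplit : v 0 j * (lam / 2%:R * q j ^+ 2 - mu ^+ 2) =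
    - \sum_(k < n) v 0 k * (J * ((Bpart R L)^`M(j)^`M(k)).@[q]).
  apply/eqP; rewrite -addr_eq0; apply/eqP; rewrite -[RHS]hcol.
  rewrite -(collapse (fun k => v 0 k * (lam / 2%:R * q k ^+ 2 - mu ^+ 2)) j) -big_split /=.
  apply: eq_bigr => k _; rewrite hess_eq (eq_sym k j).
  ring.
have hb : V * nn (lam / 2%:R * q j ^+ 2 - mu ^+ 2) <= m * (V * (de * C)).
  rewrite -nnM hsplit nnN.
  apply: le_trans (nn_sum _ _) _.
  apply: (@le_trans _ _ (\sum_(k < n) (V * (de * C)))).
    apply: ler_sum => k _; rewrite !nnM.
    apply: ler_pM; [exact: nn_ge0 | by rewrite mulr_ge0 // nn_ge0 | exact: hV |].
    apply: ler_pM; [exact: nn_ge0 | exact: nn_ge0 | lra | exact: bndB2].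
  by rewrite sumr_const card_ord mulr_natl.
have := hnh j.
have : 0 <= nn (lam / 2%:R * q j ^+ 2 - mu ^+ 2) by exact: nn_ge0.
nra.
Qed.
End Small.

Section Final.
Variables (R : realType) (L : nat) (lam mu : R[i]).
Hypothesis small : exists d : R[i], 0 < d /\ forall J, `|J| < d -> ~ inS L lam mu J.

Lemma final : exists s : seq R[i], forall J : R[i], inS L lam mu J -> J \in s.
Proof.
pose proj := @ClosedFieldQE.ex_elim R[i].
have wf : GRing.wf_QE_proj proj := @ClosedFieldQE.wf_ex_elim R[i].
have ok : GRing.valid_QE_proj proj := @ClosedFieldQE.holds_ex_elim R[i] (@solve_monicpoly R[i]).
pose g := GRing.quantifier_elim proj (GRing.to_rform (PhiF L lam mu)).
have hg J : GRing.qf_eval [:: J] g <-> inS L lam mu J.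
  rewrite inS_PhiF; split.
    by move/(GRing.quantifier_elim_rformP wf ok _ (GRing.to_rform_rformula _))/GRing.to_rformP.
  by move/GRing.to_rformP/(GRing.quantifier_elim_rformP wf ok _ (GRing.to_rform_rformula _)).
have [E [b hE]] := qf_evconst g.
case: b hE => hE; last first.
  exists E => J /hg hJ; apply: contraLR hJ => /hE ->; done.
exfalso; have [d [d0 hd]] := small.
pose c (k : nat) : R[i] := d / (k.+2)%:R.
have cinj : injective c.
  move=> a b; rewrite /c => /(congr1 (fun x => d / x)).
  rewrite invf_div mulrCA divff ?gt_eqF // mulr1 invf_div mulrCA divff ?gt_eqF // mulr1.
  by move/eqP; rewrite eqr_nat => /eqP [].
have csmall k : `|c k| < d.
  rewrite /c ger0_norm ?divr_ge0 ?ltW // ltr_pdivrMr ?ltr0n // ltr_pMr //.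
  by rewrite ltr1n.
have sub : {subset map c (iota 0 (size E).+1) <= E}.
  move=> x /mapP [k _ ->]; apply: contraT => /hE h; case: (hd _ (csmall k)); apply/hg; exact: h.
have hu : uniq (map c (iota 0 (size E).+1)) by rewrite (map_inj_uniq cinj) iota_uniq.
by have := uniq_leq_size hu sub; rewrite size_map size_iota ltnn.
Qed.
End Final.

Theorem proposition1 (R : realType) (L : nat) (hL : (2 <= L)%N)
    (lam mu : R[i]) (hlam : lam != 0) (hmu : mu != 0) :
  exists s : seq R[i], forall J : R[i], @inS R L lam mu J -> J \in s.
Proof.
exact: (@final R L lam mu (@smallJ R L lam mu hlam hmu)).
Qed.
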